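(* Let $S\subseteq\mathbb{R}$ and let $(X_t)_{t\ge 0}$ be a stochastic process on $S$, adapted to a filtration $(\mathcal{F}_t)_{t\ge 0}$. Let $h\colon S\to\mathbb{R}^{\ge 0}$ be a convex and greed-admitting function such that for all $t\ge 0$ the drift condition \[ \mathbb{E}[X_t-X_{t+1}\mid \mathcal{F}_t]\ \ge\ h(X_t) \] holds (equivalently, $\mathbb{E}[X_{t+1}\mid\mathcal{F}_t]\le \tilde h(X_t)$, where $\tilde h(x)=x-h(x)$). Then for all $t\ge 0$, \[ \mathbb{E}[X_t\mid \mathcal{F}_0]\ \le\ \tilde h^t(X_0) \qquad\text{and}\qquad \mathbb{E}[X_t]\ \le\ \tilde h^t(\mathbb{E}[X_0]). \]
   Context: A function $h\colon S\to\mathbb{R}$ is called greed-admitting if the function $x\mapsto x-h(x)$ is monotone non-decreasing on $S$. For a function $f$ and $i\ge 0$, $f^i$ denotes the $i$-fold self-composition of $f$ ($f^0$ is the identity). Here $\tilde h(x)=x-h(x)$, and its iterates are taken as in the paper (the iterates of $\tilde h$ are assumed to be defined). *)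

(* Defs.v *)
From HB Require Import structures.
From mathcomp Require Import all_boot all_order all_algebra.
From mathcomp Require Import all_classical all_reals all_analysis.
Set Implicit Arguments. Unset Strict Implicit. Unset Printing Implicit Defensive.
Import Order.TTheory GRing.Theory Num.Theory.
Local Open Scope classical_set_scope.
Local Open Scope ring_scope.

Section Defs.
Context {d : measure_display} {T : measurableType d} {R : realType}.

Definition sub_sigma (G : set (set T)) : Prop :=
  sigma_algebra setT G /\ G `<=` measurable.

Definition G_measurable (G : set (set T)) (f : T -> R) : Prop :=
  forall B : set R, measurable B -> G (f @^-1` B).

Definition filtration (F : nat -> set (set T)) : Prop :=
  (forall t, sub_sigma (F t)) /\ (forall t, F t `<=` F t.+1).

Definition adapted (F : nat -> set (set T)) (X : nat -> T -> R) : Prop :=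
  forall t, G_measurable (F t) (X t).

Definition is_cond_exp (P : probability T R) (G : set (set T)) (Z Y : T -> R)
  : Prop :=
  [/\ G_measurable G Y, P.-integrable setT (EFin \o Y) &
      forall A, G A ->
        (\int[P]_(x in A) (Y x)%:E = \int[P]_(x in A) (Z x)%:E)%E ].
End Defs.

Definition convex_set_R {R : realType} (S : set R) : Prop :=
  forall x y z, S x -> S y -> x <= z <= y -> S z.

Definition convex_on {R : realType} (S : set R) (h : R -> R) : Prop :=
  forall x y (l : R), S x -> S y -> 0 <= l <= 1 ->
    h (l * x + (1 - l) * y) <= l * h x + (1 - l) * h y.

Definition htilde {R : realType} (h : R -> R) : R -> R := fun x => x - h x.

Definition greed_admitting {R : realType} (S : set R) (h : R -> R) : Prop :=
  forall x y, S x -> S y -> x <= y -> htilde h x <= htilde h y.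

(* Main.v *)
Require Import Defs.
From HB Require Import structures.
From mathcomp Require Import all_boot all_order all_algebra.
From mathcomp Require Import all_classical all_reals all_analysis.
From mathcomp Require Import lra ring measurable_realfun.
Import Order.TTheory GRing.Theory Num.Theory.
Local Open Scope classical_set_scope.
Local Open Scope ring_scope.
Set Implicit Arguments. Unset Strict Implicit.

Section Aux.
Context {d : measure_display} {T : measurableType d} {R : realType}.
Variable P : probability T R.

Definition Int (f : T -> R) := P.-integrable setT (EFin \o f).

Lemma integS f A : measurable A -> Int f -> P.-integrable A (EFin \o f).
Proof. by move=> mA fi; apply: integrableS fi. Qed.

Lemma int_cst c : Int (fun _ => c).
Proof. exact: finite_measure_integrable_cst. Qed.

Lemma int_lin f a b : Int f -> Int (fun x => a + b * f x).
Proof.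
move=> fi; rewrite /Int.
have -> : (EFin \o (fun x => a + b * f x)) = (EFin \o (fun _ => a)) \+ (fun x => (b%:E * (EFin \o f) x)%E).
  by apply/funext => x /=; rewrite EFinD EFinM.
apply: integrableD => //; first exact: int_cst.
exact: integrableZl.
Qed.

Lemma int_sub f g : Int f -> Int g -> Int (fun x => f x - g x).
Proof.
move=> fi gi; rewrite /Int.
have -> : (EFin \o (fun x => f x - g x)) = ((EFin \o f) \- (EFin \o g))%E.
  by apply/funext => x /=; rewrite EFinB.
exact: integrableB.
Qed.

Lemma PrE A : measurable A -> (P A = (fine (P A))%:E).
Proof. by move=> mA; rewrite fineK//; exact: fin_num_measure. Qed.

Lemma Pr_ge0 A : 0 <= fine (P A).
Proof. by rewrite fine_ge0. Qed.

Lemma Rint_lin A f a b : measurable A -> Int f ->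
  \int[P]_(x in A) (a + b * f x) = a * fine (P A) + b * \int[P]_(x in A) f x.
Proof.
move=> mA fi.
rewrite RintegralD//; first by rewrite Rintegral_cst// RintegralZl//; exact: integS.
- exact: integS mA (int_cst a).
- have H := integS mA (int_lin 0 b fi).
  by apply: eq_integrable H => // x _ /=; rewrite add0r.
Qed.

Lemma le_Rint_ae A f g : measurable A -> Int f -> Int g ->
  {ae P, forall x, A x -> f x <= g x} ->
  \int[P]_(x in A) f x <= \int[P]_(x in A) g x.
Proof.
move=> mA fi gi [N [mN PN sub]].
have E h : Int h -> \int[P]_(x in A) h x = \int[P]_(x in A `\` N) h x.
  by move=> hi; rewrite /Rintegral (negligible_integral mN mA)// integS.
rewrite (E f fi) (E g gi); apply: le_Rintegral.
- exact: measurableD.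
- exact: integS (measurableD mA mN) fi.
- exact: integS (measurableD mA mN) gi.
move=> x [Ax Nx]; apply: contrapT => H; apply: Nx; apply: sub => /= K.
by apply: H; apply: K.
Qed.

Lemma RintE A f : measurable A -> Int f ->
  (\int[P]_(x in A) (f x)%:E)%E = (\int[P]_(x in A) f x)%:E.
Proof. by move=> mA fi; rewrite /Rintegral fineK//; exact: integrable_fin_num (integS mA fi). Qed.

Lemma zero_ae A f : measurable A -> Int f -> (forall x, A x -> 0 <= f x) ->
  \int[P]_(x in A) f x = 0 -> {ae P, forall x, A x -> f x = 0}.
Proof.
move=> mA fi f0 I0.
have mf := measurable_int P (integS mA fi).
have : (\int[P]_(x in A) `|(EFin \o f) x|)%E = 0%E.
  rewrite -[RHS](_ : (\int[P]_(x in A) f x)%:E = 0%E); last by rewrite I0.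
  rewrite -RintE//; apply: eq_integral => x /set_mem Ax /=.
  by rewrite /= ger0_norm// f0.
move/(ae_eq_integral_abs P mA mf); apply: filterS => x H Ax.
by have /= [] := H Ax.
Qed.

Lemma pos_strict A f : measurable A -> (0 < fine (P A)) -> Int f ->
  (forall x, A x -> 0 < f x) -> 0 < \int[P]_(x in A) f x.
Proof.
move=> mA PA fi f0; rewrite lt_neqAle Rintegral_ge0 ?andbT; last by move=> x /f0/ltW.
apply/eqP => /esym H; have := zero_ae mA fi (fun x Ax => ltW (f0 x Ax)) H.
move=> [N [mN PN sub]].
have AN : A `<=` N.
  move=> x Ax; apply: sub => /= K; have := K Ax; have := f0 x Ax.
  by move=> /gt_eqF /eqP.
have : P A = 0%E by apply/eqP; rewrite -measure_le0 -PN; apply: le_measure => //; rewrite inE.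
by move=> PA0; move: PA; rewrite PA0 /= ltxx.
Qed.
End Aux.


Lemma conv_slope {R : realType} (S : set R) h x m y :
  convex_on S h -> S x -> S m -> S y -> x < m -> m < y ->
  (h m - h x) / (m - x) <= (h y - h m) / (y - m).
Proof.
move=> hc Sx Sm Sy xm my.
have a0 : 0 < m - x by rewrite subr_gt0.
have b0 : 0 < y - m by rewrite subr_gt0.
have ab0 : 0 < y - x by lra.
pose l := (y - m) / (y - x).
have l0 : 0 <= l by rewrite divr_ge0// ltW.
have l1 : l <= 1 by rewrite ler_pdivrMr// mul1r; lra.
have lE : l * (y - x) = y - m by rewrite /l divfK// gt_eqF.
have mE : l * x + (1 - l) * y = m.
  have -> : l * x + (1 - l) * y = y - l * (y - x) by ring.
  by rewrite lE; ring.
have H := hc x y l Sx Sy (introT andP (conj l0 l1)).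
rewrite mE in H.
have H2 : (y - x) * h m <= (y - m) * h x + (m - x) * h y.
  have := ler_wpM2l (ltW ab0) H.
  have -> : (y - x) * (l * h x + (1 - l) * h y) = (l * (y - x)) * h x + ((y - x) - l * (y - x)) * h y by ring.
  by rewrite lE; have -> : y - x - (y - m) = m - x by ring.
rewrite ler_pdivrMr// mulrAC ler_pdivlMr//.
lra.
Qed.

Lemma subgrad {R : realType} (S : set R) h m :
  convex_on S h -> S m -> (exists x, S x /\ x < m) -> (exists y, S y /\ m < y) ->
  exists s, forall z, S z -> h m + s * (z - m) <= h z.
Proof.
move=> hc Sm [x0 [Sx0 x0m]] [y0 [Sy0 my0]].
pose E := [set (h m - h x) / (m - x) | x in [set x | S x /\ x < m]].
have E0 : E !=set0 by exists ((h m - h x0) / (m - x0)); exists x0.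
have Eub : (ubound E) ((h y0 - h m) / (y0 - m)).
  by move=> _ [x [Sx xm] <-]; exact: (conv_slope hc).
exists (sup E) => z Sz.
have [zm|mz|<-] := ltgtP z m; last by rewrite subrr mulr0 addr0.
- have : (h m - h z) / (m - z) <= sup E.
    by apply: ub_le_sup; [exists ((h y0 - h m) / (y0 - m)) | exists z].
  rewrite ler_pdivrMr ?subr_gt0//; lra.
- have : sup E <= (h z - h m) / (z - m).
    apply: ge_sup => // _ [x [Sx xm] <-]; exact: (conv_slope hc).
  rewrite ler_pdivlMr ?subr_gt0//; lra.
Qed.


Section Aux2.
Context {d : measure_display} {T : measurableType d} {R : realType}.
Variable P : probability T R.

Lemma mean_eq A f : measurable A -> 0 < fine (P A) -> Int P f ->
  \int[P]_(x in A) (f x - \int[P]_(x in A) f x / fine (P A)) = 0.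
Proof.
move=> mA PA fi.
have := Rint_lin (- (\int[P]_(x in A) f x / fine (P A))) 1 mA fi.
under eq_Rintegral do rewrite mul1r addrC.
by move=> ->; rewrite mul1r mulNr divfK ?gt_eqF// addNr.
Qed.

Lemma meanIn (S : set R) A f : convex_set_R S -> measurable A -> 0 < fine (P A) ->
  Int P f -> (forall x, A x -> S (f x)) ->
  S (\int[P]_(x in A) f x / fine (P A)).
Proof.
move=> cS mA PA fi fS; set m := _ / _.
have H0 := mean_eq mA PA fi; rewrite -/m in H0.
have [x1 [Sx1 x1m]] : exists x, S x /\ x <= m.
  apply: contrapT => /forallNP H.
  have : 0 < \int[P]_(x in A) (f x - m).
    apply: pos_strict => //; first by apply: int_sub => //; exact: int_cst.
    move=> x Ax; rewrite subr_gt0; have := H (f x); move/not_andP => [/(_ (fS x Ax)) [] | /negP].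
    by rewrite -ltNge.
  by rewrite H0 ltxx.
have [x2 [Sx2 mx2]] : exists x, S x /\ m <= x.
  apply: contrapT => /forallNP H.
  have : 0 < \int[P]_(x in A) (m - f x).
    apply: pos_strict => //; first by apply: int_sub => //; exact: int_cst.
    move=> x Ax; rewrite subr_gt0; have := H (f x); move/not_andP => [/(_ (fS x Ax)) [] | /negP].
    by rewrite -ltNge.
  have ic : P.-integrable A (EFin \o (fun _ => m)) by apply: integS => //; exact: int_cst.
  have ifA : P.-integrable A (EFin \o f) by apply: integS.
  rewrite RintegralB//; move: H0; rewrite RintegralB//; lra.
by apply: (cS x1 x2) => //; rewrite x1m mx2.
Qed.

Lemma jensen (S : set R) h A X Y : convex_set_R S -> convex_on S h ->
  measurable A -> 0 < fine (P A) -> Int P X -> Int P Y -> (forall w, S (X w)) ->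
  {ae P, forall w, h (X w) <= Y w} ->
  h (\int[P]_(x in A) X x / fine (P A)) * fine (P A) <= \int[P]_(x in A) Y x.
Proof.
move=> cS hc mA PA Xi Yi XS hY.
set p := fine (P A); set I := \int[P]_(x in A) X x; set m := I / p.
have Sm : S m by apply: meanIn.
have Ip : I = m * p by rewrite /m divfK// gt_eqF.
have edge : {ae P, forall w, A w -> X w = m} -> h m * p <= \int[P]_(x in A) Y x.
  move=> Xm; rewrite -Rintegral_cst//; apply: le_Rint_ae => //; first exact: int_cst.
  apply: filterS2 Xm hY => w H1 H2 Aw; by rewrite -(H1 Aw).
have [[x [Sx xm]]|nL] := pselect (exists x, S x /\ x < m); last first.
  apply: edge; have Xge w : m <= X w.
    by rewrite leNgt; apply/negP => Xw; apply: nL; exists (X w).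
  have Z : {ae P, forall w, A w -> X w - m = 0}.
    apply: zero_ae => //.
    - exact: int_sub Xi (int_cst P m).
    - by move=> w _; rewrite subr_ge0.
    - exact: mean_eq.
  by apply: filterS Z => w H Aw; apply/eqP; rewrite -subr_eq0 H.
have [[y [Sy my]]|nU] := pselect (exists y, S y /\ m < y); last first.
  apply: edge; have Xle w : X w <= m.
    by rewrite leNgt; apply/negP => Xw; apply: nU; exists (X w).
  have Z : {ae P, forall w, A w -> m + (-1) * X w = 0}.
    apply: zero_ae => //.
    - exact: int_lin.
    - by move=> w _; rewrite mulN1r subr_ge0.
    - by rewrite Rint_lin// -/p -/I Ip; ring.
  apply: filterS Z => w H Aw; have := H Aw; lra.
have [s Hs] := subgrad hc Sm (ex_intro _ x (conj Sx xm)) (ex_intro _ y (conj Sy my)).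
have -> : h m * p = \int[P]_(x in A) ((h m - s * m) + s * X x).
  by rewrite Rint_lin// -/p -/I Ip; ring.
apply: le_Rint_ae => //; first exact: int_lin.
apply: filterS hY => w H _; have := Hs (X w) (XS w); lra.
Qed.
End Aux2.


Lemma sigmaT {T} (G : set (set T)) : sigma_algebra setT G -> G setT.
Proof. by move=> [G0 GC _]; rewrite -(setD0 setT); apply: GC. Qed.

Lemma sigmaI {T} (G : set (set T)) : sigma_algebra setT G ->
  forall A B, G A -> G B -> G (A `&` B).
Proof.
move=> [G0 GC GU] A B GA GB.
have -> : A `&` B = setT `\` ((setT `\` A) `|` (setT `\` B)).
  apply/seteqP; split => x /=.
    by move=> [Ax Bx]; split => //; move=> [[_ /(_ Ax)]|[_ /(_ Bx)]].
  move=> [_ H]; split; apply: contrapT => K; apply: H; [left|right]; by split.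
apply: (GC); rewrite -bigcup2E; apply: (GU) => -[|[|n]] /=; [exact: GC|exact: GC|exact: G0].
Qed.

Lemma iter_S {R : realType} (S : set R) h :
  (forall x, S x -> S (htilde h x)) -> forall t x, S x -> S (iter t (htilde h) x).
Proof. by move=> hS; elim=> [|t IH] x Sx //=; apply: hS; apply: IH. Qed.

Lemma iter_mono {R : realType} (S : set R) h :
  (forall x, S x -> S (htilde h x)) -> greed_admitting S h ->
  forall t x y, S x -> S y -> x <= y -> iter t (htilde h) x <= iter t (htilde h) y.
Proof.
move=> hS ga; elim=> [|t IH] x y Sx Sy xy //=.
by apply: ga; [exact: iter_S|exact: iter_S|exact: IH].
Qed.

Unset Implicit Arguments.
Theorem theorem4 (d : measure_display) (T : measurableType d) (R : realType)
  (P : probability T R) (S : set R) (F : nat -> set (set T))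
  (X : nat -> T -> R) (h : R -> R) :
  convex_set_R S ->
  filtration F ->
  adapted F X ->
  (forall t w, S (X t w)) ->
  (forall t, P.-integrable setT (EFin \o X t)) ->
  (forall x, S x -> 0 <= h x) ->
  convex_on S h ->
  greed_admitting S h ->
  (forall x, S x -> S (htilde h x)) ->
  (forall t, exists Y : T -> R,
      is_cond_exp P (F t) (fun w => X t w - X t.+1 w) Y /\
      {ae P, forall w, h (X t w) <= Y w}) ->
  forall t,
    (forall Y : T -> R, is_cond_exp P (F 0%N) (X t) Y ->
       {ae P, forall w, Y w <= iter t (htilde h) (X 0%N w)}) /\
    \int[P]_(w in setT) X t w <= iter t (htilde h) (\int[P]_(w in setT) X 0%N w).
Proof.
move=> cS [Fsub Fmono] Xad XS Xi h0 hc ga hS hyp.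
have F0t t A : F 0%N A -> F t A.
  by elim: t => [//|t IH] /IH; apply: Fmono.
have Fm t A : F t A -> measurable A by move=> /((Fsub t).2).
have core t A : F 0%N A -> 0 < fine (P A) ->
    \int[P]_(x in A) X t x / fine (P A) <=
    iter t (htilde h) (\int[P]_(x in A) X 0%N x / fine (P A)).
  move=> FA PA; have mA : measurable A by exact: Fm FA.
  elim: t => [//|t IH].
  have [Y [[Ym Yi Yint] hY]] := hyp t.
  have E : \int[P]_(x in A) Y x = \int[P]_(x in A) X t x - \int[P]_(x in A) X t.+1 x.
    rewrite -RintegralB//; try exact: (integS mA (Xi _)).
    by rewrite /Rintegral Yint//; exact: F0t.
  have J := jensen cS hc mA PA (Xi t) Yi (XS t) hY.
  have Sm := meanIn cS mA PA (Xi t) (fun w _ => XS t w).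
  have S0 := meanIn cS mA PA (Xi 0%N) (fun w _ => XS 0%N w).
  apply: le_trans (ga _ _ Sm (iter_S hS t S0) IH).
  rewrite /htilde ler_pdivrMr// mulrBl divfK ?gt_eqF//.
  lra.
move=> t; split; last first.
  have FT : F 0%N setT by exact: sigmaT (Fsub 0%N).1.
  have P1 : fine (P setT) = 1 by rewrite probability_setT.
  have := core t setT FT; rewrite P1 !divr1; apply; exact: ltr01.
move=> Y [Ym Yi Yint].
set g := iter t (htilde h).
pose D (r : R) := [set y | exists x, S x /\ g x < r /\ y <= x].
pose B (r : R) := [set w | r <= Y w] `&` (X 0%N @^-1` D r).
have FB r : F 0%N (B r).
  rewrite /B; apply: (sigmaI (Fsub 0%N).1).
  - apply: (Ym [set x | r <= x]); apply: is_interval_measurable => x y /= rx _ z /andP[xz _].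
    exact: le_trans xz.
  - apply: (Xad 0%N (D r)); apply: is_interval_measurable => x y _ [u [Su [gu yu]]] z /andP[_ zy].
    by exists u; split => //; split => //; exact: le_trans yu.
have null r : P (B r) = 0%E.
  have mB : measurable (B r) by exact: Fm (FB r).
  apply: contrapT => Bn0.
  have PB : 0 < fine (P (B r)).
    rewrite lt_neqAle fine_ge0 ?andbT//; apply/eqP => /esym H; apply: Bn0.
    by rewrite (PrE P mB) H.
  have C := core t (B r) (FB r) PB.
  have E : \int[P]_(x in B r) X t x = \int[P]_(x in B r) Y x.
    by rewrite /Rintegral Yint.
  have L1 : r <= \int[P]_(x in B r) X t x / fine (P (B r)).
    rewrite ler_pdivlMr// E -Rintegral_cst//; apply: le_Rintegral => //.
    - exact: integS mB (int_cst P r).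
    - exact: integS mB Yi.
    - by move=> w [].
  have cSD : convex_set_R (S `&` D r).
    move=> x y z [Sx _] [Sy [u [Su [gu yu]]]] /andP[xz zy]; split.
      by apply: (cS x y) => //; rewrite xz zy.
    by exists u; split => //; split => //; exact: le_trans yu.
  have := meanIn cSD mB PB (Xi 0%N) (fun w Bw => conj (XS 0%N w) (Bw.2)).
  move=> [S0 [u [Su [gu mu]]]].
  have := iter_mono hS ga t S0 Su mu; rewrite -/g => H.
  have := le_trans L1 (le_trans C H); lra.
pose qs n : R := ratr (odflt 0%Q (pickle_inv n)).
have negB : P.-negligible (\bigcup_n B (qs n)).
  apply: negligible_bigcup => n; exists (B (qs n)); split; [exact: Fm (FB _)|exact: null|by []].
apply: (negligibleS _ negB) => w /= /negP; rewrite -ltNge => lt.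
have [q] := rat_in_itvoo lt; rewrite in_itv /= => /andP[q1 q2].
exists (pickle q) => //; rewrite /qs pickleK_inv /=; split; first exact: ltW.
by exists (X 0%N w); split => //; split.
Qed.
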